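(* Let $(G,M,\Delta)$ be a Garside structure, $(H,N,\delta)$ a parabolic substructure, and $T$ the set of $(H,N)$-reduced elements of $G$. Let $\theta\in T\setminus M$ with right $\Delta$-form $\theta=c\Delta^{-p}$, $p\ge1$, and let $b\in N$. Then $bc$ is unmovable and $bc\Delta^{-p}$ is the right $\Delta$-form of $b\theta$.
   Context: Let $G$ be a group and $M$ a submonoid with $M\cap M^{-1}=\{1\}$. Define $\alpha\le_L\beta$ iff $\alpha^{-1}\beta\in M$, and $\alpha\le_R\beta$ iff $\beta\alpha^{-1}\in M$. For $a\in M$ let $\mathrm{Div}_L(a)=\{b\in M: b\le_L a\}$, $\mathrm{Div}_R(a)=\{b\in M: b\le_R a\}$; $a$ is balanced if these coincide, and then $\mathrm{Div}(a)$ denotes this set. $M$ is Noetherian if each $a\in M$ admits an $n$ such that $a$ is not a product of more than $n$ non-trivial factors. A Garside structure $(G,M,\Delta)$: $\Delta\in M$ balanced, $M$ Noetherian, $\mathrm{Div}(\Delta)$ finite and generating $M$ as a monoid and $G$ as a group, $(G,\le_L)$ a lattice with meet $\wedge_L$. A parabolic substructure $(H,N,\delta)$: $\delta\in M$ balanced, $H$ (resp. $N$) the subgroup (resp. submonoid) generated by $\mathrm{Div}(\delta)$, and $\mathrm{Div}(\delta)=\mathrm{Div}(\Delta)\cap N$; it is assumed $H\ne\{1\}$. Put $\omega=\delta^{-1}\Delta$. $a\in M$ is unmovable if $\Delta\not\le_L a$; every $\alpha\in G$ has a unique right $\Delta$-form $\alpha=a\Delta^p$ ($a\in M$ unmovable,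 $p\in\mathbb Z$). $a\in M$ is $N$-reduced if $a\wedge_L\delta=1$. $\alpha$ with right $\Delta$-form $a\Delta^p$ is $(H,N)$-reduced if $a$ is $N$-reduced and either $p=0$, or $p<0$ and $\omega\not\le_L a$. *)

(* Defs.v *)
From Stdlib Require Import ZArith List.
Import ListNotations.
Set Implicit Arguments.

Record group := Group {
  gcar :> Type;
  gmul : gcar -> gcar -> gcar;
  gone : gcar;
  ginv : gcar -> gcar;
  gmulA : forall x y z, gmul x (gmul y z) = gmul (gmul x y) z;
  gmul1l : forall x, gmul gone x = x;
  gmul1r : forall x, gmul x gone = x;
  gmulVl : forall x, gmul (ginv x) x = gone;
  gmulVr : forall x, gmul x (ginv x) = gone
}.

Section Garside.
Variable G : group.
Local Notation "x * y" := (gmul G x y).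
Local Notation "1" := (gone G).
Local Notation "x ^-1" := (ginv G x) (at level 2).

Definition gprod (l : list G) : G := fold_right (fun x y => x * y) 1 l.

Fixpoint npow (x : G) (n : nat) : G :=
  match n with O => 1 | S n => x * npow x n end.
Definition zpow (x : G) (p : Z) : G :=
  match p with
  | Z0 => 1
  | Zpos n => npow x (Pos.to_nat n)
  | Zneg n => (npow x (Pos.to_nat n))^-1
  end.

Definition submonoid (M : G -> Prop) : Prop :=
  M 1 /\ (forall x y, M x -> M y -> M (x * y)).
Definition pointed (M : G -> Prop) : Prop :=
  forall x, M x -> M (x^-1) -> x = 1.

Variable M : G -> Prop.

Definition leL (x y : G) : Prop := M (x^-1 * y).
Definition leR (x y : G) : Prop := M (y * x^-1).

Definition DivL (a : G) (b : G) : Prop := M b /\ leL b a.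
Definition DivR (a : G) (b : G) : Prop := M b /\ leR b a.
Definition balanced (a : G) : Prop := M a /\ forall b, DivL a b <-> DivR a b.
(** Div(a), used only for balanced a *)
Definition Div (a : G) : G -> Prop := DivL a.

Definition noetherian : Prop :=
  forall a, M a -> exists n : nat, forall l : list G,
    Forall (fun x => M x /\ x <> 1) l -> gprod l = a -> length l <= n.

Definition gen_monoid (S : G -> Prop) (x : G) : Prop :=
  exists l : list G, Forall S l /\ x = gprod l.
Definition gen_group (S : G -> Prop) (x : G) : Prop :=
  exists l : list G, Forall (fun y => S y \/ S (y^-1)) l /\ x = gprod l.

Definition finite_set (S : G -> Prop) : Prop :=
  exists l : list G, forall x, S x -> In x l.

Definition is_meetL (x y m : G) : Prop :=
  leL m x /\ leL m y /\ forall z, leL z x -> leL z y -> leL z m.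
Definition is_joinL (x y j : G) : Prop :=
  leL x j /\ leL y j /\ forall z, leL x z -> leL y z -> leL j z.
Definition latticeL : Prop :=
  forall x y, (exists m, is_meetL x y m) /\ (exists j, is_joinL x y j).

Definition garside (Delta : G) : Prop :=
  submonoid M /\ pointed M /\
  balanced Delta /\ noetherian /\
  finite_set (Div Delta) /\
  (forall x, M x <-> gen_monoid (Div Delta) x) /\
  (forall x, gen_group (Div Delta) x) /\
  latticeL.

(** parabolic substructure (H, N, δ), with H = gen_group (Div δ), N = gen_monoid (Div δ) *)
Definition parabolic (Delta delta : G) : Prop :=
  balanced delta /\
  (forall x, Div delta x <-> (Div Delta x /\ gen_monoid (Div delta) x)) /\
  (exists h, gen_group (Div delta) h /\ h <> 1).

Definition unmovable (Delta a : G) : Prop := M a /\ ~ leL Delta a.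

Definition right_form (Delta alpha a : G) (p : Z) : Prop :=
  unmovable Delta a /\ alpha = a * zpow Delta p.

Definition N_reduced (delta a : G) : Prop := M a /\ is_meetL a delta 1.

Definition HN_reduced (Delta delta alpha : G) : Prop :=
  exists a p, right_form Delta alpha a p /\ N_reduced delta a /\
    (p = 0%Z \/ ((p < 0)%Z /\ ~ leL (delta^-1 * Delta) a)).

End Garside.

(* Main.v *)
Require Import Defs.
From Stdlib Require Import ZArith List Lia.
Import ListNotations.

Local Notation "x ** y" := (gmul _ x y) (at level 41, right associativity).
Local Notation "x ^-1" := (ginv _ x) (at level 2, left associativity).

Lemma mulKV (G : group) (x y : G) : (x^-1) ** (x ** y) = y.
Proof. rewrite gmulA, gmulVl, gmul1l. reflexivity. Qed.
Lemma mulVK (G : group) (x y : G) : x ** (x^-1 ** y) = y.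
Proof. rewrite gmulA, gmulVr, gmul1l. reflexivity. Qed.
Lemma inv_uniq (G : group) (x y : G) : x ** y = gone G -> x^-1 = y.
Proof. intro H. rewrite <- (gmul1r G (ginv G x)), <- H, mulKV. reflexivity. Qed.
Lemma inv_mul (G : group) (x y : G) : (x ** y)^-1 = y^-1 ** x^-1.
Proof. apply inv_uniq. rewrite <- gmulA, mulVK, gmulVr. reflexivity. Qed.
Lemma inv_inv (G : group) (x : G) : (x^-1)^-1 = x.
Proof. apply inv_uniq. apply gmulVl. Qed.
Lemma inv_one (G : group) : (gone G)^-1 = gone G.
Proof. apply inv_uniq. apply gmul1l. Qed.

Hint Rewrite inv_mul inv_inv inv_one gmul1l gmul1r gmulVl gmulVr mulKV mulVK : gs.
Hint Rewrite <- gmulA : gs.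
Ltac gs := autorewrite with gs.

Lemma bal_conj (G : group) (M : G -> Prop) (d : G) (hd : balanced G M d) (s : G)
  (hs : DivL G M d s) : M (d ** s ** d^-1) /\ M (d^-1 ** s ** d).
Proof.
  destruct hd as [Md Hd]. split.
  - pose proof (proj1 (Hd s) hs) as [Ms Hs]. unfold leR in Hs.
    assert (Ht : DivL G M d (d ** s^-1)).
    { split. exact Hs. unfold leL. gs. exact Ms. }
    apply Hd in Ht. destruct Ht as [_ Ht]. unfold leR in Ht. autorewrite with gs in Ht. exact Ht.
  - destruct hs as [Ms Hs]. unfold leL in Hs.
    assert (Ht : DivR G M d (s^-1 ** d)).
    { split. exact Hs. unfold leR. gs. exact Ms. }
    apply Hd in Ht. destruct Ht as [_ Ht]. unfold leL in Ht. autorewrite with gs in Ht. exact Ht.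
Qed.

Lemma npow_add (G : group) (x : G) m k : npow G x (m + k) = npow G x m ** npow G x k.
Proof. induction m; simpl. gs. reflexivity. rewrite IHm. gs. reflexivity. Qed.

Lemma npow_M (G : group) (M : G -> Prop) (sm : submonoid G M) (x : G) (hx : M x) n :
  M (npow G x n).
Proof. destruct sm as [M1 Mm]. induction n; simpl; auto. Qed.

Lemma uniq_aux (G : group) (M : G -> Prop) (sm : submonoid G M) (D : G)
  (DC : forall x, M x -> M (D ** x ** D^-1) /\ M (D^-1 ** x ** D))
  (MD : M D) (a c : G) n k (ha : M a) (hc : unmovable G M D c)
  (e : a ** (npow G D n)^-1 = c ** (npow G D (n + k))^-1) : a = c.
Proof.
  assert (Hc : c = a ** npow G D k).
  { assert (c = (c ** (npow G D (n + k))^-1) ** npow G D (n+k)) by (gs; reflexivity).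
    rewrite H, <- e, npow_add. gs. reflexivity. }
  destruct k as [|k].
  - rewrite Hc. simpl. gs. reflexivity.
  - exfalso. destruct hc as [_ hc]. apply hc. unfold leL. rewrite Hc. simpl.
    replace (D^-1 ** a ** D ** npow G D k) with ((D^-1 ** a ** D) ** npow G D k)
      by (gs; reflexivity).
    destruct sm as [M1 Mm]. apply Mm. apply DC; auto.
    apply npow_M; [split; auto| exact MD].
Qed.

Lemma conj_all (G : group) (M : G -> Prop) (sm : submonoid G M) (D : G)
  (hD : balanced G M D) (Mgen : forall x, M x <-> gen_monoid G (Div G M D) x) :
  forall x, M x -> M (D ** x ** D^-1) /\ M (D^-1 ** x ** D).
Proof.
  destruct sm as [M1 Mm].
  intros x hx. apply Mgen in hx. destruct hx as [l [Hl ->]].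
  induction l as [|s l IH]; simpl.
  - gs. auto.
  - inversion Hl; subst. destruct (IH H2) as [A B].
    destruct (bal_conj G M D hD s H1) as [C E]. split.
    + replace (D ** (s ** gprod G l) ** D^-1) with ((D ** s ** D^-1) ** (D ** gprod G l ** D^-1))
        by (gs; reflexivity). auto.
    + replace (D^-1 ** (s ** gprod G l) ** D) with ((D^-1 ** s ** D) ** (D^-1 ** gprod G l ** D))
        by (gs; reflexivity). auto.
Qed.

Lemma L1 (G : group) (M : G -> Prop) (D d : G) (sm : submonoid G M) (pt : pointed G M)
  (hD : balanced G M D) (hd : balanced G M d)
  (Hpar : forall x, Div G M d x <-> (Div G M D x /\ gen_monoid G (Div G M d) x))
  (Hlat : latticeL G M)
  (DC : forall x, M x -> M (D ** x ** D^-1) /\ M (D^-1 ** x ** D))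
  (s y : G) (hs : Div G M d s) (hy : M y)
  (h : leL G M (d^-1 ** D) (s ** y)) : leL G M (d^-1 ** D) y.
Proof.
  pose proof sm as [M1 Mm].
  pose proof hd as [Md Hd].
  assert (Hdd : Div G M d d). { split. exact Md. unfold leL. gs. exact M1. }
  assert (HdD : Div G M D d). { apply Hpar. exact Hdd. }
  destruct HdD as [_ Mw]. unfold leL in Mw.
  destruct (Hlat (d^-1 ** D) y) as [[z [hz1 [hz2 hz3]]] _].
  assert (Mz : M z).
  { assert (H := hz3 (gone G)). unfold leL in H. rewrite inv_one, !gmul1l in H. auto. }
  assert (hsw : leL G M (s^-1 ** d^-1 ** D) (d^-1 ** D)).
  { unfold leL. destruct (bal_conj G M d hd s hs) as [A _].
    destruct (DC _ A) as [_ B].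
    replace ((s^-1 ** d^-1 ** D)^-1 ** d^-1 ** D) with (D^-1 ** (d ** s ** d^-1) ** D)
      by (gs; reflexivity). exact B. }
  assert (hsy : leL G M (s^-1 ** d^-1 ** D) y).
  { unfold leL in *. replace ((s^-1 ** d^-1 ** D)^-1 ** y) with ((d^-1 ** D)^-1 ** s ** y)
      by (gs; reflexivity). exact h. }
  assert (Mv := hz3 _ hsw hsy). unfold leL in Mv, hz1, hz2.
  destruct (DC _ hz1) as [Mu' _].
  destruct (DC _ Mv) as [Mv' _].
  assert (Ma : M (d ** s^-1)). { apply Hd in hs. apply hs. }
  assert (Da : DivL G M d (d ** s^-1)). { split. exact Ma. unfold leL. gs. apply hs. }
  destruct (bal_conj G M d hd _ Da) as [Mda _].
  set (u' := D ** (z^-1 ** d^-1 ** D) ** D^-1) in *.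
  assert (Ru : DivR G M d u').
  { split. exact Mu'. unfold leR.
    replace (d ** u'^-1) with ((d ** (d ** s^-1) ** d^-1) **
       (D ** (((s^-1 ** d^-1 ** D)^-1) ** z) ** D^-1)) by (unfold u'; gs; reflexivity).
    auto. }
  apply Hd in Ru. destruct Ru as [_ Lu]. unfold leL in Lu.
  assert (Dud : Div G M d (u' ** d)).
  { apply Hpar. split.
    - split. auto. unfold leL. replace ((u' ** d)^-1 ** D) with z by (unfold u'; gs; reflexivity).
      exact Mz.
    - exists [u'; d]. split. constructor. split. exact Mu'. exact Lu.
      constructor. exact Hdd. constructor. simpl. gs. reflexivity. }
  apply Hd in Dud. destruct Dud as [_ R]. unfold leR in R.
  replace (d ** (u' ** d)^-1) with (u'^-1) in R by (gs; reflexivity).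
  assert (U1 := pt _ Mu' R).
  assert (E : d^-1 ** D = z).
  { assert (E1 : z^-1 ** d^-1 ** D = D^-1 ** u' ** D) by (unfold u'; gs; reflexivity).
    rewrite U1 in E1. rewrite gmul1l, gmulVl in E1.
    rewrite <- (mulVK G z (d^-1 ** D)), E1. gs. reflexivity. }
  unfold leL. rewrite E. exact hz2.
Qed.

Theorem lemma3p9 (G : group) (M : G -> Prop) (Delta delta : G)
  (hG : garside G M Delta) (hP : parabolic G M Delta delta)
  (theta c b : G) (p : nat) (hp : 1 <= p)
  (hT : HN_reduced G M Delta delta theta) (hnM : ~ M theta)
  (hform : right_form G M Delta theta c (- Z.of_nat p))
  (hb : gen_monoid G (Div G M delta) b) :
  unmovable G M Delta (gmul G b c) /\
  right_form G M Delta (gmul G b theta) (gmul G b c) (- Z.of_nat p).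
Proof.
  destruct hG as [sm [pt [hD [_ [_ [Mgen [_ Hlat]]]]]]].
  destruct hP as [hd [Hpar _]].
  pose proof sm as [M1 Mm].
  pose proof hd as [Md Hd].
  pose proof hD as [MD HD].
  assert (DC := conj_all G M sm Delta hD Mgen).
  assert (MN : forall l, Forall (Div G M delta) l -> M (gprod G l)).
  { induction l; simpl; intros Hl; auto. inversion Hl; subst. apply Mm; auto. apply H1. }
  destruct hform as [[Mc Uc] Eth].
  destruct hb as [l [Hl Eb]].
  assert (Mb : M b) by (subst; auto).
  (* uniqueness: omega does not divide c *)
  assert (Nw : ~ leL G M (delta^-1 ** Delta) c).
  { destruct hT as [a [q [[[Ma Ua] Ea] [_ Hor]]]].
    destruct Hor as [Hq | [Hq Hw]].
    - exfalso. apply hnM. subst q. rewrite Ea. simpl. gs. exact Ma.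
    - destruct q as [|q|q]; try lia.
      destruct p as [|k]; [lia|].
      assert (Ez : (- Z.of_nat (S k))%Z = Zneg (Pos.of_succ_nat k)) by reflexivity.
      rewrite Ez in Eth. simpl in Ea, Eth.
      rewrite Ea in Eth.
      set (n1 := Pos.to_nat q) in *. set (n2 := Pos.to_nat (Pos.of_succ_nat k)) in *.
      assert (ac : a = c).
      { destruct (le_lt_dec n1 n2) as [H|H].
        - replace n2 with (n1 + (n2 - n1)) in Eth by lia.
          eapply uniq_aux; eauto. split; auto.
        - replace n1 with (n2 + (n1 - n2)) in Eth by lia.
          symmetry. eapply uniq_aux; eauto. split; auto. }
      subst a. exact Hw. }
  assert (L : forall l, Forall (Div G M delta) l -> forall y, M y ->
            leL G M (delta^-1 ** Delta) (gprod G l ** y) -> leL G M (delta^-1 ** Delta) y).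
  { induction l0 as [|s l0 IH]; simpl; intros Hl0 y My H.
    - rewrite gmul1l in H. exact H.
    - inversion Hl0; subst. apply (IH H3 y My).
      apply (L1 G M Delta delta sm pt hD hd Hpar Hlat DC s); auto.
      rewrite gmulA. exact H. }
  assert (Ubc : unmovable G M Delta (b ** c)).
  { split. auto. intro H. apply Nw. apply (L l Hl c Mc). rewrite <- Eb.
    unfold leL in *.
    assert (HdD : Div G M Delta delta).
    { apply Hpar. split. exact Md. unfold leL. gs. exact M1. }
    destruct (DC _ Md) as [_ A].
    replace ((delta^-1 ** Delta)^-1 ** b ** c) with
      ((Delta^-1 ** delta ** Delta) ** (Delta^-1 ** b ** c)) by (gs; reflexivity).
    auto. }
  split. exact Ubc. split. exact Ubc. rewrite Eth. gs. reflexivity.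
Qed.
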